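(* Let $F$ be a finite extension of $\mathbb{Q}_p$, $G$ a finite abelian group of odd order, and $h\in\mathrm{Hom}(\Omega_F,G)$ wildly and weakly ramified with $[F^h:F]=p$. Put $L=F^h$, let $\tau$ generate $\mathrm{Gal}(L/F)$, let $\zeta$ be a primitive $p$-th root of unity, let $\alpha'\in A^h$ with $A^h=\mathcal{O}_F\mathrm{Gal}(L/F)\cdot\alpha'$, and $y_i=\sum_{k\in\mathbb{F}_p}\tau^k(\alpha')\zeta^{-ik}$ for $i\in\mathbb F_p$. Let $n\mid p-1$ be such that the image of $\mathrm{Gal}(F(\zeta)/F)$ in $\mathbb F_p^\times$ (via $\omega(\zeta)=\zeta^i$) equals $R_n$, let $d\in\mathbb F_p$ be the class of $(p-1)/n$, and let $\widetilde\tau\in\mathrm{Gal}(L(\zeta)/F(\zeta))$ be the element restricting to $\tau$ on $L$. Then for all $j,k\in\mathbb{F}_p$, \[ \widetilde{\tau}^{j}\Big(\prod_{i\in R_n}y_i^{c(i^{-1}k)}\Big)=\zeta^{jkd}\prod_{i\in R_n}y_i^{c(i^{-1}k)}, \] and consequently, with $\alpha=\frac1p\sum_{k\in\mathbb F_p}\prod_{i\in R_n}y_i^{c(i^{-1}k)}$, for all $j\in\mathbb F_p$, \[ \tau^j(\alpha)=\frac{1}{p}\sum_{k\in\mathbb{F}_p}\Big(\zeta^{jkd}\prod_{i\in R_n}y_i^{c(i^{-1}k)}\Big). \]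
   Context: $F^h$ is the fixed field of $\ker h$ in $F^c$; wildly/weakly ramified refer to $F^h/F$ being wildly ramified / having trivial second lower ramification group. $A^h$ is the square root of the inverse different of $L/F$. Since $[L:F]=p$ and $[F(\zeta):F]$ are coprime, $\mathrm{Gal}(L(\zeta)/F)\cong\mathrm{Gal}(F(\zeta)/F)\times\mathrm{Gal}(L/F)$, so $\widetilde\tau$ is well defined, and $\alpha\in L$. $R_n=(\mathbb F_p^\times)^n$; $i^{-1}$ is the inverse in $\mathbb F_p^\times$; $c(i)$ is the unique integer in $[\frac{1-p}2,\frac{p-1}2]$ representing $i\in\mathbb F_p$; $\zeta^j$ and $\tau^j$ for $j\in\mathbb F_p$ mean powers by any integer representative. *)

(* Defs.v *)
From HB Require Import structures.
From mathcomp Require Import all_boot all_order all_algebra all_fingroup all_field.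
Set Implicit Arguments. Unset Strict Implicit. Unset Printing Implicit Defensive.
Import GRing.Theory.
Local Open Scope ring_scope.

(* c(i): the unique integer in [(1-p)/2, (p-1)/2] representing i in F_p
   (p odd prime; (p-1)/2 = p./2). *)
Definition cF (p : nat) (i : 'F_p) : int :=
  if (nat_of_ord i <= p./2)%N then (nat_of_ord i)%:Z
  else (nat_of_ord i)%:Z - p%:Z.

Definition Rn (p n : nat) : {set 'F_p} :=
  [set u ^+ n | u in [set x : 'F_p | x != 0]].

Definition fpow (R : ringType) (p : nat) (x : R) (j : 'F_p) : R :=
  x ^+ (nat_of_ord j).

(* Main.v *)
Require Import Defs.
From HB Require Import structures.
From mathcomp Require Import all_boot all_order all_algebra all_fingroup all_field.
From mathcomp Require Import zify ring.
Import GRing.Theory.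
Local Open Scope ring_scope.

Lemma Fp_fermat (p : nat) (pr : prime p) (u : 'F_p) : u != 0 -> u ^+ p.-1 = 1.
Proof.
move=> u0; have := expf_card u; rewrite card_Fp //.
have p1: p = p.-1.+1 by rewrite prednK // prime_gt0.
move=> h; apply: (mulfI u0); rewrite -exprS -p1 h mulr1 //.
Qed.

Lemma card_Rn (p n : nat) : prime p -> (n %| p.-1)%N -> #|Rn p n| = (p.-1 %/ n)%N.
Proof.
move=> pr ndvd.
have n0 : (0 < n)%N.
  rewrite lt0n; apply/negP => /eqP n0; move: ndvd; rewrite n0 dvd0n.
  by have := prime_gt1 pr; lia.
set m := (p.-1 %/ n)%N.
have pm : p.-1 = (m * n)%N by rewrite divnK.
have m0 : (0 < m)%N.
  by rewrite lt0n; apply/negP => /eqP m0; move: pm; rewrite m0 mul0n; have := prime_gt1 pr; lia.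
have memR : forall w, w \in Rn p n -> exists2 u : 'F_p, u != 0 & w = u ^+ n.
  by move=> w /imsetP [u]; rewrite inE => u0 ->; exists u.
apply/eqP; rewrite eqn_leq; apply/andP; split.
  rewrite cardE; apply: (max_unity_roots m0 _ (enum_uniq _)).
  apply/allP => w; rewrite mem_enum => /memR [u u0 ->].
  by rewrite unity_rootE -exprM mulnC -pm Fp_fermat.
rewrite -(leq_pmul2r n0) -pm.
have cardA : #|predC1 (0 : 'F_p)| = p.-1 by rewrite cardC1 card_Fp.
rewrite -cardA.
have -> : #|predC1 (0%R:'F_p)| = (\sum_(u in predC1 (0%R:'F_p)) 1)%N by rewrite sum1_card.
rewrite (partition_big (fun u => u ^+ n) (mem (Rn p n))) /=.
  apply: (@leq_trans (\sum_(w in Rn p n) n)%N); last by rewrite sum_nat_const.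
  apply: leq_sum => w wR.
  rewrite -big_filter -[X in (X <= _)%N]/(\sum_(i <- _) (fun _ => 1%N) i) sum1_size.
  have nz : ('X^n - w%:P : {poly 'F_p}) != 0 by rewrite -size_poly_eq0 size_XnsubC.
  rewrite -ltnS -(size_XnsubC w n0); apply: max_poly_roots nz _ _.
    apply/allP => u; rewrite mem_filter => /andP [/andP [_ /eqP <-] _].
    by rewrite rootE !hornerE subrr.
  by apply: filter_uniq; apply: index_enum_uniq.
by move=> u u0; apply/imsetP; exists u; rewrite ?inE.
Qed.

Theorem proposition5p7
  (F0 : fieldType) (E : splittingFieldType F0) (p : nat)
  (p_prime : prime p) (p_odd : odd p)
  (charF : [pchar F0] =i pred0)
  (L : {subfield E}) (galL : galois 1%VS L) (dimL : \dim L = p)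
  (tau : gal_of L) (tau_gen : <[tau]>%g = 'Gal(L / 1%VS)%g)
  (zeta : E) (zeta_prim : p.-primitive_root zeta)
  (E_gen : <<L; zeta>>%VS = fullv)
  (alpha' : E) (alpha'L : alpha' \in L)
  (alpha'_free : free (mkseq (fun k => (tau ^+ k)%g alpha') p))
  (n : nat) (n_dvd : (n %| p.-1)%N)
  (imgGal : [set i : 'F_p | [exists s in 'Gal(<<1; zeta>>%VS / 1%VS)%g,
                               s zeta == zeta ^+ (nat_of_ord i)]] = Rn p n)
  (taut : gal_of {:E})
  (taut_fix : taut \in 'Gal({:E} / <<1; zeta>>%VS)%g)
  (taut_res : {in L, forall x, taut x = tau x}) :
  let d : 'F_p := ((p.-1 %/ n)%N)%:R in
  let y (i : 'F_p) : E :=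
    \sum_(k : 'F_p) (tau ^+ (nat_of_ord k))%g alpha' * fpow zeta (- (i * k)) in
  let P (k : 'F_p) : E := \prod_(i in Rn p n) y i ^ cF (i^-1 * k) in
  let alpha : E := p%:R^-1 * \sum_(k : 'F_p) P k in
  (forall j k : 'F_p,
      (taut ^+ (nat_of_ord j))%g (P k) = fpow zeta (j * k * d) * P k)
  /\ (forall j : 'F_p,
      (taut ^+ (nat_of_ord j))%g alpha
        = p%:R^-1 * \sum_(k : 'F_p) (fpow zeta (j * k * d) * P k)).
Proof.
move=> d y P alpha.
have p_gt1 := prime_gt1 p_prime.
have p0 : (0 < p)%N by apply: ltnW.
have zp : zeta ^+ p = 1 := prim_expr_order zeta_prim.
have zeta0 : zeta != 0.
  by apply/negP => /eqP z0; move: zp; rewrite z0 expr0n gtn_eqF // => /eqP; rewrite eq_sym oner_eq0.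
have Fval : forall x : 'F_p, x = (x : nat)%:R :> 'F_p.
  move=> x; apply: ord_inj; rewrite val_Fp_nat // modn_small //.
  exact: (leq_trans (ltn_ord x) (eq_leq (Fp_cast p_prime))).
have epE : forall (x : 'F_p) (m : nat), x = m%:R -> zeta ^+ x = zeta ^+ m.
  by move=> x m ->; rewrite val_Fp_nat // prim_expr_mod.
have epD : forall a b : 'F_p, zeta ^+ ((a + b)%R : 'F_p) = zeta ^+ a * zeta ^+ b.
  by move=> a b; rewrite -exprD; apply: epE; rewrite natrD -!Fval.
have ordtau : #[tau]%g = p.
  rewrite /order tau_gen -galois_dim // dimL dimv1 divn1 //.
have tauE : forall (x : 'F_p) (m : nat), x = m%:R -> (tau ^+ x)%g = (tau ^+ m)%g.
  by move=> x m ->; rewrite val_Fp_nat // -{1}ordtau expg_mod_order.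
have tautz : taut zeta = zeta.
  apply: (fixed_gal _ taut_fix); first exact: subvf.
  exact: memv_adjoin.
have tautT : forall m : nat, taut ((tau ^+ m)%g alpha') = (tau ^+ m.+1)%g alpha'.
  move=> m; rewrite taut_res ?memv_gal // -galM // expgSr //.
have tautTerm : forall k x : 'F_p,
    taut ((tau ^+ k)%g alpha' * fpow zeta x) = (tau ^+ (k + 1)%R)%g alpha' * fpow zeta x.
  move=> k x; rewrite rmorphM; congr (_ * _).
    rewrite (tauE (k + 1) k.+1); first exact: tautT.
    by rewrite mulrSr -Fval.
  by rewrite /fpow rmorphXn /= tautz.
have tautY : forall i, taut (y i) = zeta ^+ i * y i.
  move=> i; rewrite /y mulr_sumr.
  transitivity (\sum_(k : 'F_p) (tau ^+ (k + 1)%R)%g alpha' * fpow zeta (- (i * k))).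
    by rewrite rmorph_sum; apply: eq_bigr => k _; exact: tautTerm.
  rewrite (reindex_inj (addrI (-1))).
  apply: eq_bigr => k _.
  rewrite (_ : (-1 + k + 1 = k)%R); last by ring.
  by rewrite /fpow mulrCA -epD mulrDr mulrN1 opprD opprK.
have epC : forall a b : 'F_p, (zeta ^+ a) ^ cF b = zeta ^+ ((a * b)%R : 'F_p).
  move=> a b; rewrite /cF; case: ifP => _.
    by rewrite -exprnP -exprM; symmetry; apply: epE; rewrite natrM -!Fval.
  rewrite expfzDr ?expf_neq0 // -invr_expz -!exprnP -[zeta ^+ a ^+ p]exprM mulnC exprM zp expr1n invr1 mulr1.
  by rewrite -exprM; symmetry; apply: epE; rewrite natrM -!Fval.
have tautP : forall k, taut (P k) = zeta ^+ k ^+ (p.-1 %/ n) * P k.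
  move=> k; rewrite /P rmorph_prod.
  rewrite -(@card_Rn p n p_prime n_dvd) -prodr_const -big_split /=.
  apply: eq_bigr => i iR.
  have i0 : i != 0 by case/imsetP: iR => u; rewrite inE => u0 ->; rewrite expf_neq0.
  rewrite fmorphXz /= tautY expfzMl epC; congr (zeta ^+ _ * _).
  by rewrite mulrA divff // mul1r.
have tautPm : forall (m : nat) k, (taut ^+ m)%g (P k) = zeta ^+ k ^+ (m * (p.-1 %/ n)) * P k.
  move=> m k; elim: m => [|m IH]; first by rewrite expg0 gal_id mul0n expr0 mul1r.
  rewrite expgSr galM ?memvf // IH rmorphM rmorphXn /= rmorphXn /= tautz tautP mulrA -exprD mulSn addnC //.
have part1 : forall j k : 'F_p, (taut ^+ j)%g (P k) = fpow zeta (j * k * d) * P k.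
  move=> j k; rewrite tautPm /fpow -exprM; congr (_ * _); symmetry; apply: epE.
  by rewrite /d natrM natrM -!Fval mulrA [j * k]mulrC.
split=> // j.
rewrite /alpha rmorphM fmorphV rmorph_nat rmorph_sum; congr (_ * _).
by apply: eq_bigr => k _; rewrite /= part1.
Qed.
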